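(* Let $X$ be a nonempty set, $f:X\to X$ a function, and $\tau_2$ the fuzzy topology on $X$ defined below. Then $(X,\tau_2)$ is regular if and only if $f$ is onto.
   Context: A fuzzy subset of $X$ is a function $\mu:X\to[0,1]$; union is the pointwise supremum, intersection the pointwise minimum, complement $1-\mu$; $\emptyset$ is the constant $0$ and $X$ the constant $1$. A fuzzy topology is a family of fuzzy subsets containing $\emptyset$ and $X$, closed under arbitrary unions and finite intersections; complements of open fuzzy sets are closed; the topology generated by a base $\mathbb{B}$ consists of $\emptyset$ and all unions of subfamilies of $\mathbb{B}$. $\mathbb{N}=\{1,2,\dots\}$, $f^0=\mathrm{id}_X$, $f^{n+1}=f^n\circ f$. Definition of $\tau_2$: $J_0=\bigcap_{n\in\mathbb{N}} f^n(X)$, $J_n=f^{n-1}(X)\setminus f^n(X)$ for $n\in\mathbb{N}$; for $m\in\mathbb{N}$, $\mu_{K_m}(x)=\min\{1,n/m\}$ if $x\in J_n$ with $n\ge1$, and $\mu_{K_m}(x)=1$ otherwise; $\tau_2$ is generated by the base $\{K_m:m\in\mathbb{N}\}$. A fuzzy point $x_p$ ($x\in X$, $0<p\le1$) belongs to a fuzzy set $F$ iff $p\le\mu_F(x)$. The space is regular if for every fuzzy point $x_p$ and every closed fuzzy set $F$ with $x_p\notin F$ there exist open fuzzy sets $U,V$ with $x_p\in U$, $F\subseteq V$ and $U\cap V=\emptyset$. *)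

(* Defs.v *)
(* fuzzy sets are functions X -> R (values in [0,1]). *)
From Stdlib Require Import Reals Classical ClassicalEpsilon.
Open Scope R_scope.

Definition fuzzy (X : Type) := X -> R.

Definition in_image {X : Type} (f : X -> X) (n : nat) (x : X) : Prop :=
  exists y, Nat.iter n f y = x.

(* J_n = f^(n-1)(X) \ f^n(X), for n >= 1 *)
Definition in_J {X : Type} (f : X -> X) (n : nat) (x : X) : Prop :=
  in_image f (n - 1) x /\ ~ in_image f n x.

(* mu_{K_m}(x) = min{1, n/m} if x in J_n with n >= 1, and 1 otherwise *)
Definition K {X : Type} (f : X -> X) (m : nat) : fuzzy X :=
  fun x =>
    match excluded_middle_informative (exists n, (1 <= n)%nat /\ in_J f n x) with
    | left H =>
        let n := proj1_sig (constructive_indefinite_description _ H) in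
        Rmin 1 (INR n / INR m)
    | right _ => 1
    end.

(* Open sets of tau_2: the empty fuzzy set, and all unions (pointwise suprema)
   of subfamilies {K_m : m in S} (S a set of indices m >= 1) of the base. *)
Definition tau2_open {X : Type} (f : X -> X) (U : fuzzy X) : Prop :=
  (forall x, U x = 0) \/
  exists S : nat -> Prop,
    forall x, is_lub (fun r => exists m, (1 <= m)%nat /\ S m /\ r = K f m x) (U x).

Definition tau2_closed {X : Type} (f : X -> X) (F : fuzzy X) : Prop :=
  tau2_open f (fun x => 1 - F x).

Definition fpoint_in {X : Type} (x : X) (p : R) (F : fuzzy X) : Prop := p <= F x.

Definition fsubset {X : Type} (A B : fuzzy X) : Prop := forall x, A x <= B x.

Definition fdisjoint {X : Type} (A B : fuzzy X) : Prop := forall x, Rmin (A x) (B x) = 0.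

Definition tau2_regular {X : Type} (f : X -> X) : Prop :=
  forall (x : X) (p : R) (F : fuzzy X),
    0 < p <= 1 -> tau2_closed f F -> ~ fpoint_in x p F ->
    exists U V : fuzzy X,
      tau2_open f U /\ tau2_open f V /\
      fpoint_in x p U /\ fsubset F V /\ fdisjoint U V.

(* Main.v *)
Require Import Defs.
From Stdlib Require Import Reals Lra Lia Classical ClassicalEpsilon.
Open Scope R_scope.

Section S.
Variables (X : Type) (f : X -> X).

Lemma K_pos m x : (1 <= m)%nat -> 0 < K f m x.
Proof.
  intros Hm. unfold K. destruct excluded_middle_informative as [H0|H0].
  - destruct (constructive_indefinite_description _ H0) as [n [Hn HJ]]. simpl.
    apply Rmin_glb_lt; [lra|]. apply Rdiv_lt_0_compat; apply lt_0_INR; lia.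
  - lra.
Qed.

Lemma lub_nonempty (P : R -> Prop) l : is_lub P l -> exists r, P r.
Proof.
  intros [Hub Hl]. destruct (classic (exists r, P r)) as [H|H]; auto.
  exfalso. assert (l <= l - 1); [|lra].
  apply Hl. intros r Hr. exfalso. apply H. eauto.
Qed.

Lemma open_pos U : tau2_open f U -> (forall x, U x = 0) \/ (forall x, 0 < U x).
Proof.
  intros [H|[S H]]; [left; exact H| right].
  intros x. destruct (lub_nonempty _ _ (H x)) as [r [m [Hm [HS ->]]]].
  destruct (H x) as [Hub _].
  apply Rlt_le_trans with (K f m x). apply K_pos; auto.
  apply Hub. eauto.
Qed.

Hypothesis Hs : forall y : X, exists x : X, f x = y.

Lemma surj_image n x : in_image f n x.
Proof.
  revert x; induction n; intros x.
  - exists x; reflexivity.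
  - destruct (Hs x) as [z Hz]. destruct (IHn z) as [y Hy].
    exists y. simpl. rewrite Hy. exact Hz.
Qed.

Lemma Kone m x : K f m x = 1.
Proof.
  unfold K; destruct excluded_middle_informative as [H|H]; [exfalso|reflexivity].
  destruct H as [n [Hn [_ HJ]]]. apply HJ. apply surj_image.
Qed.

Lemma open_01 U : tau2_open f U -> (forall x, U x = 0) \/ (forall x, U x = 1).
Proof.
  intros [H|[S H]]; [left; exact H| right].
  intros x. destruct (lub_nonempty _ _ (H x)) as [r [m [Hm [HS ->]]]].
  destruct (H x) as [Hub Hl].
  apply Rle_antisym.
  - apply Hl. intros r [m' [_ [_ ->]]]. rewrite Kone; lra.
  - rewrite <- (Kone m x). apply Hub. eauto.
Qed.
End S.

Theorem proposition3p10 (X : Type) (f : X -> X) (HX : inhabited X) :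
  tau2_regular f <-> (forall y : X, exists x : X, f x = y).
Proof.
  split.
  - intros Hreg y0. destruct (classic (exists x, f x = y0)) as [E|N]; auto.
    exfalso.
    assert (HK : K f 2 y0 < 1).
    { unfold K; destruct excluded_middle_informative as [H|H].
      - destruct (constructive_indefinite_description _ H) as [n [Hn [HJ1 HJ2]]]; simpl.
        assert (n = 1%nat).
        { destruct n; [lia|]. destruct n; [reflexivity|]. exfalso.
          simpl in HJ1. destruct HJ1 as [y Hy]. simpl in Hy. apply N.
          exists (Nat.iter n f y). exact Hy. }
        subst. eapply Rle_lt_trans; [apply Rmin_r|].
        simpl. lra.
      - exfalso; apply H. exists 1%nat; split; [lia|]. split.
        + exists y0; reflexivity.
        + intros [y Hy]; apply N; exists y; exact Hy. }
    assert (HK2 := K_pos X f 2 y0 ltac:(lia)).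
    destruct (Hreg y0 1 (fun x => 1 - K f 2 x)) as [U [V [HU [HV [Hp [Hsub Hd]]]]]].
    + lra.
    + unfold tau2_closed, tau2_open. right. exists (fun m => m = 2%nat). intros x; split.
      * intros r [m [_ [-> ->]]]. lra.
      * intros b Hb. apply Hb. exists 2%nat. repeat split; [lia|ring].
    + unfold fpoint_in. lra.
    + unfold fpoint_in in Hp. specialize (Hsub y0). specialize (Hd y0). simpl in Hsub.
      destruct (open_pos X f U HU) as [U0|U0].
      * rewrite U0 in Hp; lra.
      * destruct (open_pos X f V HV) as [V0|V0].
        -- rewrite V0 in Hsub; lra.
        -- assert (0 < Rmin (U y0) (V y0)) by (apply Rmin_glb_lt; auto). lra.
  - intros Hs x p F Hp HF Hnot. unfold fpoint_in in Hnot.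
    destruct (open_01 X f Hs _ HF) as [F1|F0].
    + exfalso. specialize (F1 x). simpl in F1. lra.
    + exists (fun _ => 1), (fun _ => 0). repeat split.
      * right. exists (fun m => m = 1%nat). intros y; split.
        -- intros r [m [_ [_ ->]]]. rewrite Kone by exact Hs. lra.
        -- intros b Hb. apply Hb. exists 1%nat. rewrite Kone by exact Hs. repeat split; lia.
      * left. intros; reflexivity.
      * unfold fpoint_in. lra.
      * intros y. specialize (F0 y). simpl in F0. lra.
      * intros y. unfold Rmin; destruct Rle_dec; lra.
Qed.
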